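(* Let $\Psi$ be a root subsystem of $\Phi$. (i) If $\Psi$ is saturated in $\Phi$, then for every $D\in\mathrm{Ch}_\Psi$ there exists at least one $C\in\mathrm{Ch}_\Phi$ lifting $D$. (ii) If some chamber $C\in\mathrm{Ch}_\Phi$ lifts some chamber $D\in\mathrm{Ch}_\Psi$, then $\Psi$ is saturated in $\Phi$.
   Context: $E$ is a finite-dimensional real Euclidean space with inner product $(\cdot,\cdot)$; $\Phi\subset E$ is a finite (reduced) root system (not necessarily spanning $E$, not necessarily crystallographic), with reflections $\omega_\alpha$ through $L_\alpha=\alpha^\perp$. A root subsystem is a nonempty $\Psi\subset\Phi$ stable under $\omega_\alpha$, $\alpha\in\Psi$. $\Psi$ is saturated in $\Phi$ if $\Psi=\mathbb R\Psi\cap\Phi$, where $\mathbb R\Psi$ is the real linear span. For $X\subset\Phi$, $\mathrm{Ch}_X$ is the set of connected components of $E\setminus\bigcup_{\alpha\in X}L_\alpha$. For $C\in\mathrm{Ch}_\Phi$, $\Phi^+(C)=\{\alpha\in\Phi:(e,\alpha)>0\ \forall e\in C\}$ and $\Phi^s(C)$ is the unique simple system of $\Phi$ contained in $\Phi^+(C)$ (a simple system is a linearly independent subset $S$ such that each root is a linear combination of elements of $S$ with all coefficients $\ge0$ or all $\le0$). Similarly $\Psi^+(D)$, $\Psi^s(D)$ for $D\in\mathrm{Ch}_\Psi$. A chamber $C\in\mathrm{Ch}_\Phi$ lifts $D\in\mathrm{Ch}_\Psi$ if $\Psi^s(D)\subset\Phi^s(C)$. *)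

(* Defs.v *)
From HB Require Import structures.
From mathcomp Require Import all_boot all_order all_algebra.
From mathcomp Require Import all_classical all_reals all_analysis.
Set Implicit Arguments. Unset Strict Implicit. Unset Printing Implicit Defensive.
Import Order.TTheory GRing.Theory Num.Theory numFieldNormedType.Exports.
Local Open Scope ring_scope.
Local Open Scope classical_set_scope.

Section RootDefs.
Variables (R : realType) (n : nat).
Notation E := 'rV[R]_n.

Definition dot (u v : E) : R := (u *m v^T) 0 0.

Definition refl (a x : E) : E := x - ((2 * dot x a) / dot a a) *: a.

(* finite reduced root system (not necessarily spanning, not nec. crystallographic) *)
Definition root_system (Phi : seq E) : Prop :=
  [/\ (0 : E) \notin Phi,
      (forall a b, a \in Phi -> b \in Phi -> refl a b \in Phi) &
      (forall a (c : R), a \in Phi -> c *: a \in Phi -> c = 1 \/ c = -1)].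

Definition root_subsystem (Phi Psi : seq E) : Prop :=
  [/\ Psi != [::], {subset Psi <= Phi} &
      (forall a b, a \in Psi -> b \in Psi -> refl a b \in Psi)].

Definition saturated (Phi Psi : seq E) : Prop :=
  forall a, a \in Phi -> (a \in <<Psi>>%VS <-> a \in Psi).

Definition simple_system (Phi S : seq E) : Prop :=
  [/\ {subset S <= Phi}, free S &
      forall a, a \in Phi -> exists c : E -> R,
        a = \sum_(s <- S) c s *: s /\
        ((forall s, s \in S -> 0 <= c s) \/ (forall s, s \in S -> c s <= 0))].

Definition regular (X : seq E) : set E := [set x | forall a, a \in X -> dot x a != 0].

Definition Ch (X : seq E) : set (set E) :=
  [set C | exists x, regular X x /\ C = connected_component (regular X) x].

Definition pos (Phi : seq E) (C : set E) : seq E :=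
  [seq a <- Phi | `[< forall e, C e -> 0 < dot e a >]].

(* Phi^s(C): the (unique) simple system of Phi contained in Phi^+(C) *)
Definition simple_of (Phi : seq E) (C : set E) : set E :=
  [set a | a \in xget [::] [set S | simple_system Phi S /\ {subset S <= pos Phi C}]].

Definition lifts (Phi Psi : seq E) (C D : set E) : Prop :=
  simple_of Psi D `<=` simple_of Phi C.

End RootDefs.

(* Main.v *)
Require Import Defs.
From HB Require Import structures.
From mathcomp Require Import all_boot all_order all_algebra.
From mathcomp Require Import all_classical all_reals all_analysis.
From mathcomp Require Import ring lra.
Import Order.TTheory GRing.Theory Num.Theory numFieldNormedType.Exports.
Local Open Scope ring_scope.
Local Open Scope classical_set_scope.


Section Alg.
Context {R : realType} {n : nat}.
Notation E := 'rV[R]_n.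
Implicit Types (u v w x a b : E).

Lemma dotE u v : dot u v = \sum_i u 0 i * v 0 i.
Proof. by rewrite /dot !mxE; apply: eq_bigr => i _; rewrite mxE. Qed.

Lemma dotC u v : dot u v = dot v u.
Proof. by rewrite !dotE; apply: eq_bigr => i _; rewrite mulrC. Qed.

Lemma dotDl u v w : dot (u + v) w = dot u w + dot v w.
Proof. by rewrite !dotE -big_split; apply: eq_bigr => i _; rewrite mxE mulrDl. Qed.

Lemma dotZl k u v : dot (k *: u) v = k * dot u v.
Proof. by rewrite !dotE mulr_sumr; apply: eq_bigr => i _; rewrite mxE mulrA. Qed.

Lemma dotNl u v : dot (- u) v = - dot u v.
Proof. by rewrite -scaleN1r dotZl mulN1r. Qed.

Lemma dotBl u v w : dot (u - v) w = dot u w - dot v w.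
Proof. by rewrite dotDl dotNl. Qed.

Lemma dot0l v : dot 0 v = 0.
Proof. by rewrite -(scale0r 0) dotZl mul0r. Qed.

Lemma dotDr u v w : dot w (u + v) = dot w u + dot w v.
Proof. by rewrite !(dotC w) dotDl. Qed.
Lemma dotZr k u v : dot v (k *: u) = k * dot v u.
Proof. by rewrite !(dotC v) dotZl. Qed.
Lemma dotNr u v : dot v (- u) = - dot v u.
Proof. by rewrite !(dotC v) dotNl. Qed.

Lemma dot_suml (I : Type) (r : seq I) (P : pred I) (F : I -> E) v :
  dot (\sum_(i <- r | P i) F i) v = \sum_(i <- r | P i) dot (F i) v.
Proof.
elim: r => [|i r IH]; first by rewrite !big_nil dot0l.
by rewrite !big_cons; case: (P i) => //; rewrite dotDl IH.
Qed.

Lemma dot_sumr (I : Type) (r : seq I) (P : pred I) (F : I -> E) v :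
  dot v (\sum_(i <- r | P i) F i) = \sum_(i <- r | P i) dot v (F i).
Proof. by rewrite dotC dot_suml; apply: eq_bigr => i _; rewrite dotC. Qed.

Lemma dot_ge0 v : 0 <= dot v v.
Proof. by rewrite dotE sumr_ge0 // => i _; rewrite -expr2 sqr_ge0. Qed.

Lemma dot_eq0 v : dot v v = 0 -> v = 0.
Proof.
rewrite dotE => h; apply/rowP => i; rewrite mxE.
have : v 0 i * v 0 i = 0.
  apply: (psumr_eq0P (P := predT) (F := fun i => v 0 i * v 0 i)) => //.
  by move=> j _; rewrite -expr2 sqr_ge0.
by move/eqP; rewrite mulf_eq0 orbb => /eqP.
Qed.

Lemma dot_gt0 v : v != 0 -> 0 < dot v v.
Proof.
move=> nz; rewrite lt_neqAle dot_ge0 andbT eq_sym; apply/eqP => /dot_eq0 h.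
by rewrite h eqxx in nz.
Qed.

Lemma reflE a b : refl a b = b - ((2 * dot b a) / dot a a) *: a.
Proof. by []. Qed.

Lemma refl_self a : a != 0 -> refl a a = - a.
Proof.
move=> nz; rewrite reflE -mulrA divff ?mulr1; last by rewrite gt_eqF // dot_gt0.
by rewrite scaler_nat mulr2n opprD addrA subrr add0r.
Qed.

Lemma dot_refl a b : a != 0 -> dot (refl a b) a = - dot b a.
Proof.
move=> nz; rewrite reflE dotBl dotZl -mulrA mulVf ?mulr1; last by rewrite gt_eqF // dot_gt0.
by ring.
Qed.

Lemma reflK a b : a != 0 -> refl a (refl a b) = b.
Proof.
move=> nz; rewrite {1}reflE dot_refl // mulrN mulNr scaleNr opprK reflE.
by rewrite subrK.
Qed.

Lemma dot_reflr x a b : dot x (refl a b) = dot x b - (2 * dot b a / dot a a) * dot x a.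
Proof. by rewrite reflE dotC dotBl dotZl !(dotC x). Qed.

Definition lc (S : seq E) (c : E -> R) : E := \sum_(s <- S) c s *: s.

Lemma lc_nil c : lc [::] c = 0.
Proof. by rewrite /lc big_nil. Qed.
Lemma lc_cons s S c : lc (s :: S) c = c s *: s + lc S c.
Proof. by rewrite /lc big_cons. Qed.

Lemma dot_lc x S c : dot x (lc S c) = \sum_(s <- S) c s * dot x s.
Proof. by rewrite /lc dot_sumr; apply: eq_bigr => s _; rewrite dotZr. Qed.

Lemma lc_eq S c d : {in S, c =1 d} -> lc S c = lc S d.
Proof. by move=> h; rewrite /lc big_seq_cond [RHS]big_seq_cond; apply: eq_bigr => s /andP[/h ->]. Qed.

Lemma lcN S c : lc S (fun s => - c s) = - lc S c.
Proof. by rewrite /lc -sumrN; apply: eq_bigr => s _; rewrite scaleNr. Qed.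

Lemma lcB S c d : lc S (fun s => c s - d s) = lc S c - lc S d.
Proof. by rewrite /lc -sumrB; apply: eq_bigr => s _; rewrite scalerBl. Qed.

Lemma lcZ S k c : lc S (fun s => k * c s) = k *: lc S c.
Proof. by rewrite /lc scaler_sumr; apply: eq_bigr => s _; rewrite scalerA. Qed.

Lemma lc_rem S c s : uniq S -> s \in S -> lc S c = c s *: s + lc (rem s S) c.
Proof. by move=> uS sS; rewrite /lc (perm_big _ (perm_to_rem sS)) big_cons. Qed.

Lemma lc_delta S s : uniq S -> s \in S -> lc S (fun t => if t == s then 1 else 0) = s.
Proof.
move=> uS sS; rewrite (lc_rem _ _ _ uS sS) eqxx scale1r.
rewrite (@lc_eq _ _ (fun _ => 0)); last first.
  by move=> t; rewrite mem_rem_uniq // inE => /andP[/negbTE -> _].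
by rewrite /lc big1 ?addr0 // => t _; rewrite scale0r.
Qed.

Lemma lc_in_span S c : lc S c \in <<S>>%VS.
Proof. by rewrite /lc big_seq; apply: memv_suml => s sS; apply: memvZ; apply: memv_span. Qed.

Lemma span_lc S v : uniq S -> v \in <<S>>%VS -> exists c, v = lc S c.
Proof.
elim: S v => [|s S IH] v /=.
  by move=> _; rewrite span_nil memv0 => /eqP ->; exists (fun _ => 0); rewrite lc_nil.
case/andP => sS uS; rewrite span_cons => /memv_addP [y /vlineP [k ->]] [z zS ->].
have [c ->] := IH z uS zS.
exists (fun t => if t == s then k else c t); rewrite lc_cons eqxx; congr (_ + _).
by apply: lc_eq => t tS; case: eqP => // ts; rewrite -ts tS in sS.
Qed.

Lemma lc_ext S T c : uniq S -> uniq T -> {subset S <= T} ->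
  lc T (fun t => if t \in S then c t else 0) = lc S c.
Proof.
move=> uS uT sub; rewrite /lc.
rewrite (bigID (fun t => t \in S)) /= [X in _ + X]big1 ?addr0; last first.
  by move=> t /negbTE ->; rewrite scale0r.
rewrite -big_filter (eq_big_seq (fun t => c t *: t)); last first.
  by move=> t; rewrite mem_filter => /andP[-> _].
apply: perm_big; apply: uniq_perm; first exact: filter_uniq.
  done.
by move=> t; rewrite mem_filter; case tS: (t \in S) => //=; rewrite sub.
Qed.

Lemma free_lc0 S c : free S -> lc S c = 0 -> forall s, s \in S -> c s = 0.
Proof.
move=> fS h s sS.
have := (@freeP _ _ _ (in_tuple S)) fS (fun i => c (nth 0 S i)).
have eq : \sum_(i < size S) c (nth 0 S i) *: (in_tuple S)`_i = 0.
  by rewrite -[RHS]h /lc (big_nth 0) big_mkord.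
have hi : (index s S < size S)%N by rewrite index_mem.
by move=> /(_ eq (Ordinal hi))/=; rewrite nth_index.
Qed.

Lemma free_lc S c d : free S -> lc S c = lc S d -> forall s, s \in S -> c s = d s.
Proof.
move=> fS h s sS; apply/eqP; rewrite -subr_eq0; apply/eqP.
by apply: (@free_lc0 S (fun s => c s - d s) fS _ s sS); rewrite lcB h subrr.
Qed.

Lemma lc_free S : uniq S -> (forall c, lc S c = 0 -> forall s, s \in S -> c s = 0) -> free S.
Proof.
move=> uS H; apply/(@freeP _ _ _ (in_tuple S)) => k hk i.
pose kn (j : nat) : R := if insub j is Some i' then k i' else 0.
have := H (fun s => kn (index s S)).
have -> : lc S (fun s => kn (index s S)) = 0.
  rewrite -hk /lc (big_nth 0) big_mkord; apply: eq_bigr => j _.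
  by rewrite index_uniq // /kn valK.
move=> /(_ erefl (nth 0 S i) (mem_nth _ (ltn_ord i))).
by rewrite index_uniq // /kn valK.
Qed.

Lemma psum_seq_eq0 (I : eqType) (r : seq I) (F : I -> R) :
  (forall i, i \in r -> 0 <= F i) -> \sum_(i <- r) F i = 0 -> forall i, i \in r -> F i = 0.
Proof.
elim: r => [|j r IH] // h; rewrite big_cons => /eqP.
rewrite paddr_eq0; [|by apply: h; rewrite inE eqxx|].
  case/andP => /eqP Fj /eqP Fr i; rewrite inE => /orP[/eqP -> //|ir].
  by apply: IH => // k kr; apply: h; rewrite inE kr orbT.
by rewrite big_seq sumr_ge0 // => k kr; apply: h; rewrite inE kr orbT.
Qed.

Lemma sum_gt0_ex (I : eqType) (r : seq I) (F : I -> R) :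
  0 < \sum_(i <- r) F i -> exists2 i, i \in r & 0 < F i.
Proof.
elim: r => [|j r IH]; first by rewrite big_nil ltxx.
rewrite big_cons => h.
case: (ltP 0 (F j)) => Fj; first by exists j; rewrite ?inE ?eqxx.
have : 0 < \sum_(i <- r) F i by lra.
by case/IH => i ir Fi; exists i; rewrite // inE ir orbT.
Qed.

Lemma count_lt (T : eqType) (P Q : pred T) (s : seq T) :
  (forall z, P z -> Q z) -> (exists2 z, z \in s & Q z && ~~ P z) ->
  (count P s < count Q s)%N.
Proof.
move=> PQ; elim: s => [|z s IH]; first by case.
case=> w; rewrite inE => /orP[/eqP ->|ws] hw /=.
  case/andP: hw => -> /negbTE ->; rewrite add0n add1n ltnS.
  by apply: sub_count.
have := IH (ex_intro2 _ _ w ws hw).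
case Pz: (P z); first by rewrite (PQ _ Pz).
by case: (Q z) => /= h; rewrite ?add0n ?add1n //; apply: ltnW.
Qed.

Lemma avoid_fin (B : seq R) : exists t, t \notin B.
Proof.
suff [M [M0 HM]] : exists M, 0 <= M /\ forall z, z \in B -> z < M.
  by exists M; apply/negP => /HM; rewrite ltxx.
elim: B => [|z B [M [M0 HM]]]; first by exists 0.
exists (M + `|z| + 1); split; first by rewrite addr_ge0 // addr_ge0.
move=> w; rewrite inE => /orP[/eqP ->|cB].
  have := ler_norm z; lra.
have := HM w cB; have := normr_ge0 z; lra.
Qed.

Lemma dot_cont (a : E) : continuous (fun e : E => dot e a).
Proof.
have -> : (fun e : E => dot e a) = (fun e => \sum_(i <- index_enum 'I_n | true) (a 0 i * e 0 i)).
  by apply: funext => e; rewrite dotE; apply: eq_bigr => i _; rewrite mulrC.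
apply: continuous_big; first exact: add_continuous.
move=> i _ x. have h1 := (@coord_continuous R 1 n 0 i x). have h2 := (@mulrl_continuous R (a 0 i) (x 0 i)). exact: (continuous_comp h1 h2).
Qed.

Lemma sign_const (X : seq E) (x e a : E) : a \in X -> regular X x ->
  connected_component (regular X) x e -> 0 < dot x a -> 0 < dot e a.
Proof.
move=> aX rx ce px.
have cc := @component_connected _ (regular X) x.
have := connected_continuous_connected cc
   (continuous_subspaceT (dot_cont a)).
move/connected_intervalP => I.
have ne : forall z, connected_component (regular X) x z -> dot z a != 0.
  by move=> z /connected_component_sub; apply.
rewrite lt_neqAle eq_sym (ne _ ce) /=; rewrite leNgt; apply/negP => neg.
have : [set dot z a | z in connected_component (regular X) x] 0.
  apply: (I (dot e a) (dot x a)); [by exists e|by exists x; [exact: connected_component_refl|]|].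
  by rewrite (ltW neg) ltW.
by case=> z cz /eqP; apply/negP; apply: ne.
Qed.
End Alg.


Section Cone.
Context {R : realType} {n : nat}.
Notation E := 'rV[R]_n.

Definition cone (D : seq E) (v : E) :=
  exists c : E -> R, (forall s, s \in D -> 0 <= c s) /\ v = lc D c.

Lemma lcD (S : seq E) c d : lc S (fun s => c s + d s) = lc S c + lc S d.
Proof. by rewrite /lc -big_split; apply: eq_bigr => s _; rewrite scalerDl. Qed.

Lemma lc0 (S : seq E) : lc S (fun _ => 0) = 0.
Proof. by rewrite /lc big1 // => s _; rewrite scale0r. Qed.

Lemma cone0 D : cone D 0.
Proof. by exists (fun _ => 0); rewrite lc0. Qed.

Lemma coneD D u v : cone D u -> cone D v -> cone D (u + v).
Proof.
move=> [c [c0 ->]] [d [d0 ->]]; exists (fun s => c s + d s); split; last by rewrite lcD.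
by move=> s sD; rewrite addr_ge0 ?c0 ?d0.
Qed.

Lemma coneZ D k v : 0 <= k -> cone D v -> cone D (k *: v).
Proof.
move=> k0 [c [c0 ->]]; exists (fun s => k * c s); split; last by rewrite lcZ.
by move=> s sD; rewrite mulr_ge0 ?c0.
Qed.

Lemma cone_mem D s : uniq D -> s \in D -> cone D s.
Proof.
move=> uD sD; exists (fun t => if t == s then 1 else 0); split; last by rewrite lc_delta.
by move=> t _; case: eqP.
Qed.

Lemma cone_lc D c : (forall s, s \in D -> 0 <= c s) -> cone D (lc D c).
Proof. by move=> h; exists c. Qed.

Lemma cone_trans D D' v : (forall s, s \in D -> cone D' s) -> cone D v -> cone D' v.
Proof.
elim: D v => [|s D IH] v h [c [c0 ->]]; first by rewrite lc_nil; apply: cone0.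
rewrite lc_cons; apply: coneD.
  by apply: coneZ; [apply: c0; rewrite inE eqxx | apply: h; rewrite inE eqxx].
apply: IH; first by move=> t tD; apply: h; rewrite inE tD orbT.
by apply: cone_lc => t tD; apply: c0; rewrite inE tD orbT.
Qed.

Lemma cone_pos (x : E) D v : (forall s, s \in D -> 0 < dot x s) -> cone D v -> 0 <= dot x v.
Proof.
move=> h [c [c0 ->]]; rewrite dot_lc big_seq sumr_ge0 // => s sD.
by rewrite mulr_ge0 ?c0 // ltW // h.
Qed.

Lemma dotx0 (x : E) : dot x 0 = 0.
Proof. by rewrite dotC dot0l. Qed.

Section Exist.
Variable Phi : seq E.
Hypothesis hrefl : forall a b, a \in Phi -> b \in Phi -> refl a b \in Phi.
Variable x : E.
Hypothesis hreg : forall a, a \in Phi -> dot x a != 0.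

Let P := [seq a <- Phi | 0 < dot x a].

Let nz a : a \in Phi -> a != 0.
Proof. by move=> /hreg; apply: contraNneq => ->; rewrite dotx0. Qed.

Let Ppos s : s \in P -> 0 < dot x s.
Proof. by rewrite mem_filter => /andP[]. Qed.

Let PPhi s : s \in P -> s \in Phi.
Proof. by rewrite mem_filter => /andP[]. Qed.

Definition good D := [/\ uniq D, {subset D <= P} & forall v, v \in P -> cone D v].
Definition irred (D : seq E) := forall b, b \in D -> ~ cone (rem b D) b.

Lemma exists_irred : exists D, good D /\ irred D.
Proof.
suff H : forall k D, good D -> (size D <= k)%N -> exists D, good D /\ irred D.
  apply: (H (size (undup P)) (undup P)) => //; split; first exact: undup_uniq.
    by move=> s; rewrite mem_undup.
  by move=> v vP; apply: cone_mem; rewrite ?undup_uniq ?mem_undup.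
elim=> [|k IH] D [uD sD cD] szD.
  exists D; split => // b; move: szD; rewrite leqn0 => /nilP -> //.
case: (pselect (exists2 b, b \in D & cone (rem b D) b)) => [[b bD cb]|nb].
  apply: (IH (rem b D)); last by move: szD; rewrite size_rem //; case: (size D).
  split; first exact: rem_uniq.
    by move=> s /mem_rem /sD.
  move=> v vP; apply: (@cone_trans D); last exact: cD.
  move=> s sD'; case: (eqVneq s b) => [->//|sb].
  by apply: cone_mem; rewrite ?rem_uniq // mem_rem_uniq // inE sb.
exists D; split => // b bD cb; apply: nb; by exists b.
Qed.


Lemma rem_key D u t w c : good D -> irred D -> u \in D -> 0 < t ->
  cone (rem u D) w -> 0 < dot x w -> (forall s, s \in D -> 0 <= c s) ->
  t *: u = w + lc D c -> False.
Proof.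
move=> [uD sD cD] irD uin t0 cw xw c0 eq.
have Dpos : forall s, s \in D -> 0 < dot x s by move=> s /sD /Ppos.
have remD : forall s, s \in rem u D -> s \in D by move=> s /mem_rem.
have crem : cone (rem u D) (lc (rem u D) c) by apply: cone_lc => s /remD /c0.
move: eq; rewrite (lc_rem _ _ _ uD uin) => eq.
have eq2 : (t - c u) *: u = w + lc (rem u D) c.
  by rewrite scalerBl eq addrCA addrAC subrr add0r.
case: (ltP (c u) t) => hcu.
  apply: (irD u uin).
  have eu : u = (t - c u)^-1 *: (w + lc (rem u D) c).
    by rewrite -eq2 scalerA mulVf ?scale1r // subr_eq0 gt_eqF.
  rewrite [X in cone _ X]eu.
  by apply: coneZ; [rewrite invr_ge0 subr_ge0; exact: ltW | apply: coneD].
have := congr1 (dot x) eq2; rewrite dotZr dotDr.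
have h1 : (t - c u) * dot x u <= 0.
  by rewrite mulr_le0_ge0 ?subr_le0 // ltW // Dpos.
have h2 : 0 <= dot x (lc (rem u D) c).
  by apply: (@cone_pos x (rem u D)) => // s /remD /Dpos.
lra.
Qed.

Lemma obtuse D a b : good D -> irred D -> a \in D -> b \in D -> a != b -> dot a b <= 0.
Proof.
move=> gD irD aD bD ab; case: (gD) => [uD sD cD].
rewrite leNgt; apply/negP => pab.
have aPhi : a \in Phi by apply/PPhi/sD.
have bPhi : b \in Phi by apply/PPhi/sD.
have xa : 0 < dot x a by apply/Ppos/sD.
have xb : 0 < dot x b by apply/Ppos/sD.
have aa : 0 < dot a a by apply: dot_gt0; apply: nz.
set k := 2 * dot b a / dot a a.
have k0 : 0 < k by rewrite /k divr_gt0 // mulr_gt0 // dotC.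
set g := refl a b.
have gPhi : g \in Phi by apply: hrefl.
have gE : g = b - k *: a by [].
have := hreg _ gPhi; rewrite neq_lt => /orP[gneg|gpos].
  have ngPhi : - g \in Phi by rewrite -refl_self ?nz //; apply: hrefl.
  have : - g \in P by rewrite mem_filter ngPhi dotNr oppr_gt0 gneg.
  move=> /cD [c [c0 ec]].
  apply: (@rem_key D a k b c) => //.
    by apply: cone_mem; rewrite ?rem_uniq // mem_rem_uniq // inE eq_sym ab.
  by rewrite -ec gE opprB addrC subrK.
have : g \in P by rewrite mem_filter gPhi gpos.
move=> /cD [c [c0 ec]].
apply: (@rem_key D b 1 (k *: a) c) => //.
- apply: coneZ; first exact: ltW.
  by apply: cone_mem; rewrite ?rem_uniq // mem_rem_uniq // inE ab.
- by rewrite dotZr mulr_gt0.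
- by rewrite -ec gE scale1r addrC subrK.
Qed.

Lemma half_free D c : good D -> irred D -> lc D c = 0 -> forall s, s \in D -> c s <= 0.
Proof.
move=> gD irD h; case: (gD) => [uD sD cD].
have Dpos : forall s, s \in D -> 0 < dot x s by move=> s /sD /Ppos.
set v := \sum_(s <- D | 0 < c s) c s *: s.
set w := \sum_(s <- D | ~~ (0 < c s)) c s *: s.
have vw : v + w = 0 by rewrite -h /lc (bigID (fun s => 0 < c s)) /=.
have vw0 : 0 <= dot v w.
  rewrite /v /w dot_suml big_seq_cond sumr_ge0 // => s /andP[sD0 cs].
  rewrite dotZl dot_sumr big_seq_cond; apply: mulr_ge0; first exact: ltW.
  apply: sumr_ge0 => t /andP[tD ct].
  rewrite dotZr mulr_le0 // ?leNgt // -leNgt.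
  apply: (@obtuse D s t gD irD sD0 tD); apply: contraNneq ct => <-; exact: cs.
have vv : dot v v = 0.
  have : w = - v by apply/eqP; rewrite -addr_eq0 addrC vw.
  move=> ew; move: vw0; rewrite ew dotNr oppr_ge0 => le.
  by apply/eqP; rewrite eq_le le dot_ge0.
have v0 := @dot_eq0 R n v vv.
have hx : \sum_(s <- D | 0 < c s) c s * dot x s = 0.
  by rewrite -[RHS](dotx0 x) -v0 /v dot_sumr; apply: eq_bigr => s _; rewrite dotZr.
move=> s sD0; rewrite leNgt; apply/negP => cs.
have : c s * dot x s = 0.
  apply: (@psum_seq_eq0 R _ [seq t <- D | 0 < c t] (fun t => c t * dot x t)).
  - move=> t; rewrite mem_filter => /andP[ct tD].
    by rewrite mulr_ge0 ?ltW // Dpos.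
  - by rewrite big_filter.
  - by rewrite mem_filter cs.
by move/eqP; rewrite gt_eqF // mulr_gt0 // Dpos.
Qed.

Lemma good_free D : good D -> irred D -> free D.
Proof.
move=> gD irD; case: (gD) => uD _ _; apply: lc_free => // c h s sD.
apply/eqP; rewrite eq_le (@half_free D c gD irD h s sD) /=.
have := @half_free D (fun t => - c t) gD irD; rewrite lcN h oppr0 => /(_ erefl s sD).
by rewrite oppr_le0.
Qed.

Lemma simple_exists : exists S, simple_system Phi S /\ forall s, s \in S -> 0 < dot x s.
Proof.
have [D [gD irD]] := exists_irred; case: (gD) => uD sD cD.
exists D; split; last by move=> s /sD /Ppos.
split; first by move=> s /sD /PPhi.
  exact: good_free.
move=> a aPhi; have := hreg _ aPhi; rewrite neq_lt => /orP[neg|pos].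
  have naPhi : - a \in Phi by rewrite -refl_self ?nz //; apply: hrefl.
  have : - a \in P by rewrite mem_filter naPhi dotNr oppr_gt0 neg.
  move=> /cD [c [c0 ec]]; exists (fun s => - c s); split.
    by change (a = lc D (fun s => - c s)); rewrite lcN -ec opprK.
  by right => s /c0; rewrite oppr_le0.
have : a \in P by rewrite mem_filter aPhi pos.
by move=> /cD [c [c0 ec]]; exists c; split => //; left.
Qed.


End Exist.
End Cone.


Section Sat.
Context {R : realType} {n : nat}.
Notation E := 'rV[R]_n.

Variables (Phi Psi S J : seq E) (x : E).
Hypothesis hrPhi : forall a b, a \in Phi -> b \in Phi -> refl a b \in Phi.
Hypothesis hrPsi : forall a b, a \in Psi -> b \in Psi -> refl a b \in Psi.
Hypothesis hred : forall a (c : R), a \in Phi -> c *: a \in Phi -> c = 1 \/ c = -1.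
Hypothesis h0 : (0 : E) \notin Phi.
Hypothesis sS : simple_system Phi S.
Hypothesis xS : forall s, s \in S -> 0 < dot x s.
Hypothesis JS : {subset J <= S}.
Hypothesis fJ : free J.
Hypothesis JPsi : {subset J <= Psi}.
Hypothesis PsiPhi : {subset Psi <= Phi}.

Let nzPhi a : a \in Phi -> a != 0.
Proof. by move=> aP; apply: contraNneq h0 => <-. Qed.

Lemma sat_step (a : E) :
  (forall b : E, (count (fun y : E => (dot x y < dot x b)%R) Phi < count (fun y => (dot x y < dot x a)%R) Phi)%N ->
     b \in Phi -> (exists c, b = lc J c /\ forall s, s \in J -> 0 <= c s) -> b \in Psi) ->
  a \in Phi -> (exists c, a = lc J c /\ forall s, s \in J -> 0 <= c s) -> a \in Psi.
Proof.
move=> IH aPhi [c [ea c0]].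
case: sS => SPhi fS cohS.
have uJ := free_uniq fJ; have uS := free_uniq fS.
have JPhi : forall s, s \in J -> s \in Phi by move=> s /JPsi /PsiPhi.
have : 0 < dot a (lc J c) by rewrite -ea; apply: dot_gt0; apply: nzPhi.
rewrite dot_lc => /sum_gt0_ex [s sJ] pos.
have cs0 := c0 s sJ.
have cs : 0 < c s.
  by rewrite lt_neqAle cs0 andbT eq_sym; apply: contraTneq pos => ->; rewrite mul0r ltxx.
move: pos; rewrite pmulr_rgt0 // => das.
have sPhi := JPhi s sJ; have snz := nzPhi _ sPhi.
case: (pselect (exists2 t, t \in J & (t != s) && (c t != 0))) => [[t tJ /andP[ts ct]]|none].
  set k := 2 * dot a s / dot s s.
  have k0 : 0 < k by rewrite /k divr_gt0 ?mulr_gt0 ?dot_gt0.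
  set cg := fun u => c u - k * (if u == s then 1 else 0).
  have gE : refl s a = lc J cg.
    by rewrite /cg lcB lcZ lc_delta // -ea.
  have gPhi : refl s a \in Phi by apply: hrPhi.
  have [e [ege ecoh]] := cohS _ gPhi.
  have ext : forall u, u \in S -> e u = (if u \in J then cg u else 0).
    move=> u uS'; apply: (@free_lc _ _ S e (fun u => if u \in J then cg u else 0) fS _ u uS').
    by rewrite (lc_ext _ _ _ uJ uS JS) -gE; exact: esym ege.
  have et : e t = c t.
    by rewrite ext ?JS // tJ /cg (negbTE ts) mulr0 subr0.
  have ct0 : 0 < c t by rewrite lt_neqAle eq_sym ct c0.
  have cg0 : forall u, u \in J -> 0 <= cg u.
    move=> u uJ0; have := ext u (JS _ uJ0); rewrite uJ0 => <-.
    case: ecoh => [pos|neg]; first exact: pos _ (JS _ uJ0).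
    have := neg t (JS _ tJ); rewrite et => h; lra.
  have xs := xS s (JS _ sJ).
  have gPsi : refl s a \in Psi.
    apply: IH => //; last by exists cg.
    apply: count_lt.
      move=> y hy; apply: (lt_trans hy).
      by rewrite dot_reflr -/k ltrBlDr ltrDl mulr_gt0.
    exists (refl s a) => //; rewrite ltxx andbT.
    by rewrite dot_reflr -/k ltrBlDr ltrDl mulr_gt0.
  have ea3 : a = refl s (refl s a) by rewrite reflK.
  by rewrite [X in X \in _]ea3; apply: hrPsi => //; apply: JPsi.
have ea2 : a = c s *: s.
  rewrite ea (lc_rem _ _ _ uJ sJ) (@lc_eq R n (rem s J) c (fun _ => 0)) ?lc0 ?addr0 // => t.
  rewrite mem_rem_uniq // inE => /andP[ts tJ].
  by apply/eqP; apply: contra_notT none => ct; exists t => //; rewrite ts.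
have := hred s (c s) sPhi; rewrite -ea2 => /(_ aPhi) [c1|cm1].
  by rewrite ea2 c1 scale1r JPsi.
by move: cs; rewrite cm1; lra.
Qed.

Lemma sat_ind (a : E) : a \in Phi -> (exists c, a = lc J c /\ forall s, s \in J -> 0 <= c s) -> a \in Psi.
Proof.
suff H : forall N (a : E), (count (fun y : E => (dot x y < dot x a)%R) Phi <= N)%N -> a \in Phi ->
    (exists c, a = lc J c /\ forall s, s \in J -> 0 <= c s) -> a \in Psi.
  by apply: (H _ a (leqnn _)).
elim=> [|N IHN] b hb; apply: sat_step => b' lt.
  by rewrite leqn0 in hb; rewrite (eqP hb) ltn0 in lt.
by apply: IHN; rewrite -ltnS (leq_trans lt).
Qed.

End Sat.


Section Gen.
Context {R : realType} {n : nat}.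
Notation E := 'rV[R]_n.

Lemma orth_witness (Psi : seq E) (a : E) : a \notin <<Psi>>%VS ->
  exists p, (forall y, y \in Psi -> dot p y = 0) /\ dot p a != 0.
Proof.
move=> na; apply: contrapT => H; move/negP: na; apply.
pose M : 'M[R]_(size Psi, n) := \matrix_(i, j) (Psi`_i) 0 j.
pose K := cokermx M.
have aK : a *m K = 0.
  apply/rowP => j; rewrite !mxE.
  pose p : E := \row_k K k j.
  have Vp : forall y, y \in Psi -> dot p y = 0.
    move=> y yP; have hi : (index y Psi < size Psi)%N by rewrite index_mem.
    have := congr1 (fun (A : 'M[R]_(size Psi, n)) => A (Ordinal hi) j) (mulmx_coker M).
    rewrite !mxE /= => <-; rewrite dotE; apply: eq_bigr => k _; rewrite !mxE mulrC.
    by rewrite nth_index.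
  have : dot p a = 0.
    by apply: contrapT => hn; apply: H; exists p; split => //; apply/eqP.
  by move=> h0; rewrite -[RHS]h0 dotE; apply: eq_bigr => k _; rewrite mulrC /p [in RHS]mxE.
have : (a <= M)%MS by rewrite submxE aK.
case/submxP => D ->; rewrite mulmx_sum_row; apply: memv_suml => i _.
apply: memvZ; have -> : row i M = Psi`_i by apply/rowP => j; rewrite !mxE.
by apply: memv_span; apply: mem_nth.
Qed.


Lemma avoid_sub (V : E -> Prop) (L : seq E) :
  V 0 -> (forall u v, V u -> V v -> V (u + v)) -> (forall k v, V v -> V (k *: v)) ->
  (forall a, a \in L -> exists p, V p /\ dot p a != 0) ->
  exists p, V p /\ forall a, a \in L -> dot p a != 0.
Proof.
move=> V0 VD VZ; elim: L => [|b L IH] h; first by exists 0.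
case: IH => [a aL|p [Vp hp]]; first by apply: h; rewrite inE aL orbT.
have [q [Vq hq]] := h b (mem_head _ _).
have [t ht] := avoid_fin [seq - dot p a / dot q a | a <- b :: L].
exists (p + t *: q); split; first by apply: VD => //; apply: VZ.
move=> a aL; rewrite dotDl dotZl.
case: (eqVneq (dot q a) 0) => qa.
  rewrite qa mulr0 addr0; move: aL; rewrite inE => /orP[/eqP ab|]; last exact: hp.
  by move: hq; rewrite -ab qa eqxx.
apply/eqP => e; move/negP: ht; apply; apply/mapP; exists a => //.
have tq : t * dot q a = - dot p a.
  by apply/eqP; rewrite -subr_eq0 opprK addrC e.
by rewrite -tq mulfK.
Qed.

Lemma eps_exists (p y : E) (L : seq E) : (forall a, a \in L -> dot p a != 0) ->
  exists e, 0 < e /\ forall a, a \in L -> e * `|dot y a| < `|dot p a|.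
Proof.
elim: L => [|b L IH] h; first by exists 1; split.
case: IH => [a aL|e [e0 he]]; first by apply: h; rewrite inE aL orbT.
have pb : 0 < `|dot p b| by rewrite normr_gt0 h // inE eqxx.
set e' := Num.min e (`|dot p b| / (`|dot y b| + 1)).
have yb : 0 < `|dot y b| + 1 by rewrite ltr_wpDl.
have e'0 : 0 < e' by rewrite lt_min e0 divr_gt0.
exists e'; split => // a; rewrite inE => /orP[/eqP ->|aL].
  have h1 : e' * (`|dot y b| + 1) <= `|dot p b|.
    by rewrite -ler_pdivlMr // ge_min lexx orbT.
  have h2 : e' * `|dot y b| < e' * (`|dot y b| + 1) by rewrite ltr_pM2l // ltrDl.
  exact: lt_le_trans h2 h1.
apply: le_lt_trans (he a aL); rewrite ler_wpM2r // ge_min lexx.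
done.
Qed.
End Gen.


Section Bridge.
Context {R : realType} {n : nat}.
Notation E := 'rV[R]_n.

Lemma pos_mem (X : seq E) C a : a \in pos X C -> a \in X /\ forall e, C e -> 0 < dot e a.
Proof. by rewrite mem_filter => /andP[/asboolP h aX]. Qed.

Definition sof (X : seq E) (C : set E) :=
  xget [::] [set S | simple_system X S /\ {subset S <= pos X C}].

Lemma sof_spec (X : seq E) (x : E) :
  (forall a b, a \in X -> b \in X -> refl a b \in X) -> regular X x ->
  simple_system X (sof X (connected_component (regular X) x)) /\
  {subset sof X (connected_component (regular X) x) <= pos X (connected_component (regular X) x)}.
Proof.
move=> hr rx.
have := @xgetPex _ [::] [set S | simple_system X S /\ {subset S <= pos X (connected_component (regular X) x)}].
apply.
have [S [sS pS]] := simple_exists X hr x rx.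
exists S; split => // s sS'; rewrite mem_filter; apply/andP; split.
  apply/asboolP => e ce; apply: (sign_const X x e s _ rx ce); [case: sS => h _ _; exact: h | exact: pS].
by case: sS => h _ _; apply: h.
Qed.

End Bridge.

Section Main.
Context {R : realType} {n : nat}.
Notation E := 'rV[R]_n.

Lemma part2 (Phi Psi : seq E) : root_system Phi -> root_subsystem Phi Psi ->
  (exists C D, [/\ Ch Phi C, Ch Psi D & lifts Phi Psi C D]) -> saturated Phi Psi.
Proof.
move=> [h0 hrPhi hred] [neP subP hrPsi] [C [D [[x [rx ->]] [y [ry ->]] lift]]].
have [sS pS] := sof_spec Phi x hrPhi rx.
have [sJ pJ] := sof_spec Psi y hrPsi ry.
set S := sof Phi _ in sS pS; set J := sof Psi _ in sJ pJ.
have JS : {subset J <= S} by move=> a aJ; apply: (lift a).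
have xS : forall s, s \in S -> 0 < dot x s.
  by move=> s /pS /pos_mem [_ h]; apply: h; apply: connected_component_refl.
case: (sJ) => JPsi fJ cohJ; case: (sS) => SPhi fS cohS.
have uJ := free_uniq fJ; have uS := free_uniq fS.
move=> a aPhi; split; last exact: memv_span.
move=> asp.
have : (<<Psi>> <= <<J>>)%VS.
  apply/span_subvP => z zPsi; have [d [zd _]] := cohJ z zPsi.
  by rewrite zd; apply: (lc_in_span J d).
move/subvP => /(_ a asp) aJ.
have [d ad] := span_lc J a uJ aJ.
have [c [ac coh]] := cohS a aPhi.
have cd : forall s, s \in J -> c s = d s.
  move=> s sJ'; have := @free_lc R n S c (fun t => if t \in J then d t else 0) fS.
  rewrite (lc_ext _ _ _ uJ uS JS) -ad => /(_ (esym ac) s (JS _ sJ')); rewrite sJ'.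
  done.
have acJ : a = lc J c by rewrite ad; apply: lc_eq => s /cd ->.
have nz : a != 0 by apply: contraNneq h0 => <-.
case: coh => [pos|neg].
  by apply: (sat_ind _ _ _ _ x hrPhi hrPsi hred h0 sS xS JS fJ JPsi subP) => //; exists c; split => // s /JS /pos.
have naPhi : - a \in Phi by rewrite -refl_self //; apply: hrPhi.
have : - a \in Psi.
  apply: (sat_ind _ _ _ _ x hrPhi hrPsi hred h0 sS xS JS fJ JPsi subP) => //.
  by exists (fun s => - c s); rewrite lcN -acJ; split => // s /JS /neg; rewrite oppr_ge0.
move=> naPsi; have := hrPsi _ _ naPsi naPsi; rewrite refl_self ?opprK //.
by rewrite oppr_eq0.
Qed.


Lemma part1 (Phi Psi : seq E) : root_system Phi -> root_subsystem Phi Psi ->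
  saturated Phi Psi -> forall D, Ch Psi D -> exists C, Ch Phi C /\ lifts Phi Psi C D.
Proof.
move=> [h0 hrPhi hred] [neP subP hrPsi] sat D [y [ry ->]].
have [sJ pJ] := sof_spec Psi y hrPsi ry.
set J := sof Psi _ in sJ pJ.
case: (sJ) => JPsi fJ cohJ; have uJ := free_uniq fJ.
have yJ : forall j, j \in J -> 0 < dot y j.
  by move=> j /pJ /pos_mem [_ h]; apply: h; apply: connected_component_refl.
pose V := fun p : E => forall z, z \in Psi -> dot p z = 0.
pose L := [seq a <- Phi | a \notin Psi].
have [p [Vp hp]] : exists p, V p /\ forall a, a \in L -> dot p a != 0.
  apply: avoid_sub.
  - by move=> z _; rewrite dot0l.
  - by move=> u v Vu Vv z zP; rewrite dotDl Vu // Vv // addr0.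
  - by move=> k v Vv z zP; rewrite dotZl Vv // mulr0.
  - move=> a; rewrite mem_filter => /andP[naP aPhi]; apply: orth_witness.
    by apply/negP => /(proj1 (sat a aPhi)); apply/negP.
have [e [e0 he]] := eps_exists p y L hp.
pose x := p + e *: y.
have dx : forall a, dot x a = dot p a + e * dot y a by move=> a; rewrite dotDl dotZl.
have posL : forall a, a \in L -> 0 < dot x a -> 0 < dot p a.
  move=> a aL; rewrite dx => h; rewrite lt_neqAle eq_sym hp //=; rewrite leNgt; apply/negP => neg.
  have := he a aL; rewrite (ltr0_norm neg).
  have : e * dot y a <= e * `|dot y a| by rewrite ler_pM2l // ler_norm.
  lra.
have regx : regular Phi x.
  move=> a aPhi; case aPsi: (a \in Psi).
    by rewrite dx Vp // add0r; apply: mulf_neq0; [by rewrite gt_eqF | exact: ry].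
  have aL : a \in L by rewrite mem_filter aPsi.
  rewrite dx; apply/eqP => h.
  have := he a aL; have -> : dot p a = - (e * dot y a) by apply/eqP; rewrite -addr_eq0 h.
  by rewrite normrN normrM gtr0_norm // ltxx.
exists (connected_component (regular Phi) x); split; first by exists x.
have [sS pS] := sof_spec Phi x hrPhi regx.
set S := sof Phi _ in sS pS.
case: (sS) => SPhi fS cohS; have uS := free_uniq fS.
have xS : forall s, s \in S -> 0 < dot x s.
  by move=> s /pS /pos_mem [_ h]; apply: h; apply: connected_component_refl.
move=> a /= aJ.
have aPsi := JPsi a aJ; have aPhi := subP a aPsi.
have pa : dot p a = 0 := Vp a aPsi.
have ya : 0 < dot y a := yJ a aJ.
have xa : 0 < dot x a by rewrite dx pa add0r mulr_gt0.
have [c [ac coh]] := cohS a aPhi.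
change (a = lc S c) in ac.
have c0 : forall s, s \in S -> 0 <= c s.
  case: coh => // neg; exfalso.
  have : dot x (lc S c) <= 0.
    by rewrite dot_lc big_seq sumr_le0 // => s sS'; rewrite mulr_le0_ge0 ?neg // ltW ?xS.
  rewrite -ac; lra.
have sumP : \sum_(s <- S) c s * dot p s = 0 by rewrite -dot_lc -ac.
have nnp : forall t, t \in S -> 0 <= c t * dot p t.
  move=> t tS; case tP: (t \in Psi); first by rewrite Vp // mulr0.
  have tL : t \in L by rewrite mem_filter tP SPhi.
  by rewrite mulr_ge0 ?c0 // ltW // posL // xS.
have cz : forall s, s \in S -> s \notin Psi -> c s = 0.
  move=> s sS' nsP.
  have sL : s \in L by rewrite mem_filter nsP SPhi.
  have ps := posL s sL (xS s sS').
  have := (@psum_seq_eq0 R _ S (fun t => c t * dot p t)) nnp sumP s sS'.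
  by move/eqP; rewrite mulf_eq0 (gt_eqF ps) orbF => /eqP.
pose c2 := fun s => if s \in Psi then c s else 0.
have ac2 : a = lc S c2.
  rewrite ac; apply: lc_eq => s sS'; rewrite /c2; case: ifP => // /negbT h.
  by rewrite cz.
have ysP : forall s, s \in S -> s \in Psi -> 0 < dot y s.
  move=> s sS' sP; have := xS s sS'; rewrite dx Vp // add0r pmulr_rgt0 //.
have Hd : forall s : E, exists d : E -> R, s \in S -> s \in Psi ->
    s = lc J d /\ forall j, j \in J -> 0 <= d j.
  move=> s; case: (pselect (s \in S /\ s \in Psi)) => [[sS' sP]|]; last first.
    by move=> h; exists (fun _ => 0) => sS' sP; exfalso; apply: h.
  have [d [sd coh']] := cohJ s sP; change (s = lc J d) in sd.
  exists d => _ _; split => //.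
  case: coh' => // neg; exfalso.
  have : dot y (lc J d) <= 0.
    by rewrite dot_lc big_seq sumr_le0 // => j jJ; rewrite mulr_le0_ge0 ?neg // ltW ?yJ.
  rewrite -sd; have := ysP s sS' sP; lra.
case: (choice Hd) => dd hdd.
pose f := fun j => \sum_(s <- S) c2 s * dd s j.
have af : a = lc J f.
  rewrite ac2 /lc /f.
  transitivity (\sum_(s <- S) c2 s *: \sum_(j <- J) dd s j *: j).
    apply: eq_big_seq => s sS'; rewrite /c2; case: ifP => sP; last by rewrite !scale0r.
    by congr (_ *: _); exact: (hdd s sS' sP).1.
  under eq_bigr => s _ do rewrite scaler_sumr.
  rewrite exchange_big /=; apply: eq_bigr => j _; rewrite scaler_suml.
  by apply: eq_bigr => s _; rewrite scalerA.
have fa : forall j, j \in J -> f j = (if j == a then 1 else 0).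
  move=> j jJ; apply: (@free_lc R n J f (fun t => if t == a then 1 else 0) fJ _ j jJ).
  by rewrite -af lc_delta.
have nn : forall s j, s \in S -> j \in J -> 0 <= c2 s * dd s j.
  move=> s j sS' jJ; rewrite /c2; case: ifP => sP; last by rewrite mul0r.
  by rewrite mulr_ge0 ?c0 // (hdd s sS' sP).2.
have : 0 < f a by rewrite fa // eqxx ltr01.
rewrite /f => /sum_gt0_ex [s sS' pos].
have sP : s \in Psi by move: pos; rewrite /c2; case: ifP => // _; rewrite mul0r ltxx.
have [sd dpos] := hdd s sS' sP.
have c2s : 0 <= c2 s by rewrite /c2 sP c0.
have c2pos : 0 < c2 s.
  by rewrite lt_neqAle c2s andbT eq_sym; apply: contraTneq pos => ->; rewrite mul0r ltxx.
have dsa : 0 < dd s a by move: pos; rewrite pmulr_rgt0.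
have ddz : forall j, j \in J -> j != a -> dd s j = 0.
  move=> j jJ ja; have := fa j jJ; rewrite (negbTE ja) => fj.
  have := (@psum_seq_eq0 R _ S (fun t => c2 t * dd t j)) (fun t tS => nn t j tS jJ) fj s sS'.
  by move/eqP; rewrite mulf_eq0 (gt_eqF c2pos) /= => /eqP.
have sa : s = dd s a *: a.
  rewrite {1}sd (lc_rem _ _ _ uJ aJ) (@lc_eq R n (rem a J) (dd s) (fun _ => 0)) ?lc0 ?addr0 //.
  by move=> j; rewrite mem_rem_uniq // inE => /andP[ja jJ]; exact: ddz.
have := hred a (dd s a) aPhi; rewrite -sa => /(_ (SPhi s sS')) [d1|dm1].
  by move: sS'; rewrite sa d1 scale1r.
by move: dsa; rewrite dm1; lra.
Qed.

Theorem theorem1_gen (Phi Psi : seq E) :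
  root_system Phi -> root_subsystem Phi Psi ->
  (saturated Phi Psi ->
     forall D, Ch Psi D -> exists C, Ch Phi C /\ lifts Phi Psi C D) /\
  ((exists C D, [/\ Ch Phi C, Ch Psi D & lifts Phi Psi C D]) ->
     saturated Phi Psi).
Proof. by move=> h1 h2; split; [exact: part1 | exact: part2]. Qed.

End Main.

Theorem theorem1 (R : realType) (n : nat) (Phi Psi : seq 'rV[R]_n) :
  root_system Phi -> root_subsystem Phi Psi ->
  (saturated Phi Psi ->
     forall D, Ch Psi D -> exists C, Ch Phi C /\ lifts Phi Psi C D) /\
  ((exists C D, [/\ Ch Phi C, Ch Psi D & lifts Phi Psi C D]) ->
     saturated Phi Psi).
Proof. exact: theorem1_gen. Qed.
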